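(* Fix integers $m\ge d\ge1$, $\lambda=d/m$, and $\sigma>0$. Let $p_1,p_2,\dots$ be monic polynomials of degree $d$, $p_i(x)=\prod_{j=1}^d(x-r_{i,j}^2)$ with $r_{i,j}$ real, such that $\frac1d\sum_jr_{i,j}^2=\sigma^2$ for all $i$. For $N\ge1$ let $P_N=p_1\boxplus_{d,\lambda}\cdots\boxplus_{d,\lambda}p_N$ and let $\widetilde P_N$ be the monic polynomial of degree $2d$ whose roots are the roots of $\mathbb{S}P_N$ multiplied by $1/\sqrt N$. Then, as $N\to\infty$, $\widetilde P_N$ converges coefficientwise to the monic polynomial whose roots are those of $x\mapsto L_d^{(m-d)}\!\big(\tfrac{m x^2}{\sigma^2}\big)$.
   Context: $(p\boxplus_{d,\lambda}q)(x)=\sum_{k=0}^dx^{d-k}(-1)^k\sum_{i+j=k}\frac{(d-i)!(d-j)!}{d!(d-k)!}\frac{(m-i)!(m-j)!}{m!(m-k)!}a_ib_j$ for $p=\sum(-1)^ia_ix^{d-i}$, $q=\sum(-1)^ib_ix^{d-i}$; associative, bilinear, preserves monic polynomials with nonnegative roots. $\mathbb{S}P(x)=P(x^2)$. Generalized Laguerre polynomial: $L_d^{(\alpha)}(x)=\sum_{i=0}^d\binom{d+\alpha}{d-i}\frac{(-x)^i}{i!}$. *)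

(* Defs.v *)
From HB Require Import structures.
From mathcomp Require Import all_boot all_order all_algebra.
From mathcomp Require Import all_classical all_reals all_analysis.
Set Implicit Arguments. Unset Strict Implicit. Unset Printing Implicit Defensive.
Import Order.TTheory GRing.Theory Num.Theory.
Local Open Scope ring_scope.

Section Defs.
Variable R : realType.

Definition ecoef (d : nat) (p : {poly R}) (i : nat) : R := (-1) ^+ i * p`_(d - i).

(* rectangular finite free convolution  p [+]_{d, d/m} q *)
Definition rconv (d m : nat) (p q : {poly R}) : {poly R} :=
  \sum_(k < d.+1)
    ((-1) ^+ k *
     \sum_(i < k.+1)
       (((d - i)`! * (d - (k - i))`!)%:R / ((d`! * (d - k)`!)%:R) *
        (((m - i)`! * (m - (k - i))`!)%:R / ((m`! * (m - k)`!)%:R)) *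
        ecoef d p i * ecoef d q (k - i))) *: 'X^(d - k).

Fixpoint convN (d m : nat) (p : nat -> {poly R}) (n : nat) : {poly R} :=
  match n with
  | 0 => p 0%N
  | n'.+1 => rconv d m (convN d m p n') (p n)
  end.

Definition Sop (P : {poly R}) : {poly R} := P \Po 'X^2.

(* monic-preserving dilation: roots of Q multiplied by c (c <> 0) *)
Definition dilate (c : R) (Q : {poly R}) : {poly R} :=
  c ^+ (size Q).-1 *: (Q \Po (c^-1 *: 'X)).

(* P~_N : roots of S P_N multiplied by 1/sqrt N, with P_N = p_1 [+] ... [+] p_N
   (here p_1, ..., p_N are p 0, ..., p (N-1)) *)
Definition Ptilde (d m : nat) (p : nat -> {poly R}) (N : nat) : {poly R} :=
  dilate (Num.sqrt (N%:R))^-1 (Sop (convN d m p N.-1)).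

Definition laguerre (d alpha : nat) : {poly R} :=
  \sum_(i < d.+1) ('C(d + alpha, d - i)%:R * (-1) ^+ i / (i`!)%:R) *: 'X^i.

Definition lag_target (d m : nat) (sigma : R) : {poly R} :=
  let Q := laguerre d (m - d) \Po ((m%:R / sigma ^+ 2) *: 'X^2) in
  (lead_coef Q)^-1 *: Q.

End Defs.

(* Main.v *)
Require Import Defs.
From HB Require Import structures.
From mathcomp Require Import all_boot all_order all_algebra.
From mathcomp Require Import all_classical all_reals all_analysis.
From mathcomp Require Import ring lra zify.
Import Order.TTheory GRing.Theory Num.Theory.
Local Open Scope classical_set_scope.
Local Open Scope ring_scope.

Section Est.
Variable R : realFieldType.

Lemma grow (u : nat -> R) (A K0 : R) (j : nat) :
  0 <= A -> 0 <= K0 -> u 0%N <= A ->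
  (forall n, u n.+1 <= u n + K0 * (n.+1%:R) ^+ j) ->
  forall n, u n <= (A + K0) * (n.+1%:R) ^+ j.+1.
Proof.
move=> A0 K00 u0 H; elim=> [|n IH].
  by rewrite expr1n mulr1; lra.
apply: (le_trans (H n)).
set N : R := n.+1%:R.
have N0 : 0 <= N by rewrite ler0n.
have -> : (n.+2%:R : R) = N + 1 by rewrite /N natr1.
have hab : N ^+ j <= (N + 1) ^+ j.
  by apply: lerXn2r; rewrite ?nnegrE //; lra.
have a0 : 0 <= N ^+ j by apply: exprn_ge0.
move: IH; rewrite exprS => IH.
rewrite exprS.
set a := N ^+ j in hab a0 IH *; set b := (N + 1) ^+ j in hab *.
have h1 : 0 <= (A + K0) * N * (b - a).
  apply: mulr_ge0; [apply: mulr_ge0 => //; lra | lra].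
have h2 : K0 * a <= (A + K0) * b.
  apply: ler_pM => //; lra.
have e : (A + K0) * ((N + 1) * b) = (A + K0) * N * b + (A + K0) * b by ring.
rewrite e.
have e2 : (A + K0) * (N * a) = (A + K0) * N * a by ring.
rewrite e2 in IH.
set P := (A + K0) * N in h1 e IH *.
have : P * (b - a) = P * b - P * a by ring.
lra.
Qed.

Lemma ek_bound (k : nat) : exists c : R, 0 <= c /\ forall x : R, 1 <= x ->
  `|x * ((x + 1) ^+ k.+1 - x ^+ k.+1 - k.+1%:R * x ^+ k)| <= c * x ^+ k.
Proof.
elim: k => [|k [c [c0 IH]]].
  exists 0; split => // x _.
  have -> : x * ((x + 1) ^+ 1 - x ^+ 1 - 1%:R * x ^+ 0) = 0.
    by rewrite expr0 !expr1; ring.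
  by rewrite normr0 mul0r.
exists (2 * c + k.+1%:R); split.
  apply: addr_ge0; [lra| exact: ler0n].
move=> x x1.
have e : x * ((x + 1) ^+ k.+2 - x ^+ k.+2 - k.+2%:R * x ^+ k.+1)
   = (x + 1) * (x * ((x + 1) ^+ k.+1 - x ^+ k.+1 - k.+1%:R * x ^+ k))
     + k.+1%:R * x ^+ k.+1.
  rewrite -(natr1 k.+1) !exprS; ring.
rewrite e.
set E := x * ((x + 1) ^+ k.+1 - x ^+ k.+1 - k.+1%:R * x ^+ k).
have hE := IH x x1.
have xk0 : 0 <= x ^+ k by apply: exprn_ge0; lra.
apply: (le_trans (ler_normD _ _)).
rewrite normrM (ger0_norm (_ : 0 <= x + 1)); last lra.
rewrite (ger0_norm (_ : 0 <= k.+1%:R * x ^+ k.+1)); last first.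
  by apply: mulr_ge0; [exact: ler0n | apply: exprn_ge0; lra].
have h1 : (x + 1) * `|E| <= (2 * x) * (c * x ^+ k).
  apply: ler_pM; [lra | exact: normr_ge0 | lra | exact: hE].
rewrite exprS.
have : (2 * x) * (c * x ^+ k) + k.+1%:R * (x * x ^+ k) = (2 * c + k.+1%:R) * (x * x ^+ k) by ring.
lra.
Qed.


Definition Fq (s : R) (n i : nat) : R := s ^+ i * (n.+1%:R) ^+ i / (i`!)%:R.

Lemma Fq_bound (s : R) (K n i : nat) : (i <= K)%N ->
  `|Fq s n i| <= (1 + `|s|) ^+ K * (n.+1%:R) ^+ i.
Proof.
move=> iK; rewrite /Fq -mulrA normrM normrX.
have f0 : (0 : R) < (i`!)%:R by rewrite ltr0n fact_gt0.
have N0 : (0 : R) <= (n.+1%:R) ^+ i by apply: exprn_ge0; rewrite ler0n.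
rewrite (ger0_norm (_ : 0 <= (n.+1%:R) ^+ i / (i`!)%:R)); last by apply: divr_ge0 => //; exact: ltW.
apply: ler_pM.
- by apply: exprn_ge0; exact: normr_ge0.
- by apply: divr_ge0 => //; exact: ltW.
- apply: (le_trans (_ : _ <= (1 + `|s|) ^+ i)).
    by have := normr_ge0 s; move=> hs0; apply: lerXn2r; rewrite ?nnegrE; lra.
  by apply: ler_weXn2l => //; have := normr_ge0 s; lra.
- rewrite ler_pdivrMr //; apply: ler_peMr => //.
  by rewrite ler1n fact_gt0.
Qed.

Lemma est (G H : nat -> nat -> R) (s B : R) (K : nat) :
  (forall k, G 0%N k = H 0%N k) ->
  (forall n, H n 0%N = 1) -> (forall n, H n 1%N = s) ->
  (forall n j, (j <= K)%N -> `|H n j| <= B) ->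
  (forall n k, (k <= K)%N -> G n.+1 k = \sum_(i < k.+1) G n i * H n.+1 (k - i)%N) ->
  forall k, (k <= K)%N -> exists C : R, forall n,
    `|G n k - Fq s n k| * n.+1%:R <= C * (n.+1%:R) ^+ k.
Proof.
move=> G0 H0 H1 HB Grec.
have Gn0 : forall n, G n 0%N = 1.
  elim=> [|n IH]; first by rewrite G0 H0.
  by rewrite Grec // big_ord1 /= subnn IH H0 mulr1.
have Gn1 : (1 <= K)%N -> forall n, G n 1%N = s * n.+1%:R.
  move=> K1; elim=> [|n IH]; first by rewrite G0 H1 mulr1.
  rewrite Grec // big_ord_recr big_ord1 /= subn0 subnn Gn0 H1 H0 IH mul1r mulr1.
  by rewrite -(natr1 n.+1); ring.
suff main : forall k, (k <= K)%N -> exists C : R, 0 <= C /\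
    forall i, (i <= k)%N -> forall n,
    `|G n i - Fq s n i| * n.+1%:R <= C * (n.+1%:R) ^+ i.
  move=> k kK; have [C [_ HC]] := main k kK.
  by exists C => n; apply: HC.
elim=> [|k IH] hk.
  exists 0; split => // i; rewrite leqn0 => /eqP -> n.
  by rewrite Gn0 /Fq !expr0 mulr1 fact0 divr1 subrr normr0 !mul0r.
have [C0 [C0pos HC0]] := IH (ltnW hk).
suff [C1 [C1pos HC1]] : exists C1 : R, 0 <= C1 /\ forall n,
    `|G n k.+1 - Fq s n k.+1| * n.+1%:R <= C1 * (n.+1%:R) ^+ k.+1.
  exists (C0 + C1); split; first lra.
  move=> i; rewrite leq_eqVlt => /orP [/eqP -> n | ik n].
    apply: (le_trans (HC1 n)); apply: ler_wpM2r; last lra.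
    by apply: exprn_ge0; rewrite ler0n.
  rewrite ltnS in ik.
  apply: (le_trans (HC0 i ik n)); apply: ler_wpM2r; last lra.
  by apply: exprn_ge0; rewrite ler0n.
case: k IH hk HC0 => [|k] IH hk HC0.
  exists 0; split => // n.
  have f1 : ((1`!)%:R : R) = 1 by [].
  by rewrite (Gn1 hk) /Fq !expr1 f1 divr1 subrr normr0 !mul0r.
set M := (1 + `|s|) ^+ K + C0.
have Gb : forall i n, (i <= k.+1)%N -> `|G n i| <= M * (n.+1%:R) ^+ i.
  move=> i n hi.
  have N1 : (1 : R) <= n.+1%:R by rewrite ler1n.
  have hD := HC0 i hi n.
  have hD' : `|G n i - Fq s n i| <= C0 * (n.+1%:R) ^+ i.
    apply: le_trans hD; apply: ler_peMr => //; exact: normr_ge0.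
  have hF := Fq_bound s K n i (leq_trans hi (ltnW hk)).
  have -> : G n i = (G n i - Fq s n i) + Fq s n i by ring.
  apply: (le_trans (ler_normD _ _)).
  rewrite /M mulrDl; lra.
have [c [c0 Hc]] := ek_bound k.+1.
set K0 := `|s| * C0 + k.+1%:R * M * `|B| + `|s| ^+ k.+2 / (k.+2`!)%:R * c.
have K00 : 0 <= K0.
  have M0 : 0 <= M.
    rewrite /M; apply: addr_ge0 => //; apply: exprn_ge0; have := normr_ge0 s; lra.
  apply: addr_ge0; [apply: addr_ge0|].
  - by rewrite mulr_ge0 ?normr_ge0.
  - by rewrite !mulr_ge0 ?normr_ge0 ?ler0n.
  - by rewrite mulr_ge0 ?divr_ge0 ?exprn_ge0 ?normr_ge0 ?ler0n.
pose u n := `|G n k.+2 - Fq s n k.+2|.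
have step : forall n, u n.+1 <= u n + K0 * (n.+1%:R) ^+ k.
  move=> n.
  set N : R := n.+1%:R.
  have N1 : 1 <= N by rewrite ler1n.
  have N0 : 0 < N by lra.
  have Nk0 : 0 <= N ^+ k by apply: exprn_ge0; lra.
  have rec : G n.+1 k.+2 = \sum_(i < k.+1) G n i * H n.+1 (k.+2 - i)%N
         + s * G n k.+1 + G n k.+2.
    rewrite Grec // big_ord_recr big_ord_recr /= subnn subSnn H0 H1 mulr1.
    by rewrite (mulrC (G n k.+1)).
  set rest := \sum_(i < k.+1) _ in rec.
  have hrest : `|rest| <= k.+1%:R * M * `|B| * N ^+ k.
    apply: (le_trans (ler_norm_sum _ _ _)).
    apply: (le_trans (_ : _ <= \sum_(i < k.+1) M * `|B| * N ^+ k)).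
      apply: ler_sum => i _; rewrite normrM.
      have hi : (i <= k.+1)%N by apply: leq_trans (ltnW (ltn_ord i)) _.
      have hGi := Gb i n hi.
      have hH : `|H n.+1 (k.+2 - i)%N| <= `|B|.
        apply: le_trans (HB n.+1 (k.+2 - i)%N _) (ler_norm B).
        exact: leq_trans (leq_subr i k.+2) hk.
      have Ni : N ^+ i <= N ^+ k by apply: ler_weXn2l => //; rewrite -ltnS.
      have M0 : 0 <= M.
        rewrite /M; apply: addr_ge0 => //; apply: exprn_ge0; have := normr_ge0 s; lra.
      rewrite -mulrA [_ * N ^+ k]mulrC mulrA.
      apply: ler_pM; [exact: normr_ge0 | exact: normr_ge0 | | exact hH].
      apply: le_trans hGi _; exact: ler_wpM2l.
    by rewrite sumr_const card_ord -!mulrA mulr_natl.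
  have hprev : `|G n k.+1 - Fq s n k.+1| <= C0 * N ^+ k.
    have := HC0 k.+1 (leqnn _) n; rewrite exprS -/N.
    rewrite mulrCA => h; by rewrite -(ler_pM2r N0) [X in _ <= X]mulrC.
  have hE := Hc N N1.
  have Fid : Fq s n.+1 k.+2 - Fq s n k.+2 - s * Fq s n k.+1
     = s ^+ k.+2 / (k.+2`!)%:R * ((N + 1) ^+ k.+2 - N ^+ k.+2 - k.+2%:R * N ^+ k.+1).
    rewrite /Fq -/N -(natr1 n.+1) -/N factS natrM.
    have f0 : ((k.+1)`!)%:R != 0 :> R by rewrite pnatr_eq0 -lt0n fact_gt0.
    have k0 : (k.+2)%:R != 0 :> R by rewrite pnatr_eq0.
    rewrite (exprS s k.+1); field.
    by rewrite f0 /= -natrD pnatr_eq0.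
  have hE' : `|(N + 1) ^+ k.+2 - N ^+ k.+2 - k.+2%:R * N ^+ k.+1| <= c * N ^+ k.
    move: hE; rewrite normrM (ger0_norm (ltW N0)) => hE.
    by rewrite -(ler_pM2l N0) mulrCA -exprS.
  rewrite /u.
  have -> : G n.+1 k.+2 - Fq s n.+1 k.+2 =
     (G n k.+2 - Fq s n k.+2) + s * (G n k.+1 - Fq s n k.+1) + rest
     - (Fq s n.+1 k.+2 - Fq s n k.+2 - s * Fq s n k.+1).
    rewrite rec; ring.
  rewrite Fid.
  set X1 := G n k.+2 - _; set X2 := G n k.+1 - _.
  set e := (N + 1) ^+ _ - _ - _ in hE' *.
  have sf0 : 0 <= `|s| ^+ k.+2 / (k.+2`!)%:R.
    apply: divr_ge0; [apply: exprn_ge0; exact: normr_ge0| exact: ler0n].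
  have t1 : `|s * X2| <= `|s| * C0 * N ^+ k.
    rewrite normrM -mulrA; apply: ler_wpM2l => //; exact: normr_ge0.
  have t3 : `|s ^+ k.+2 / (k.+2`!)%:R * e| <= `|s| ^+ k.+2 / (k.+2`!)%:R * c * N ^+ k.
    have nX : `|s ^+ k.+2 / (k.+2`!)%:R| = `|s| ^+ k.+2 / (k.+2`!)%:R.
      by rewrite normrM normrX (ger0_norm (_ : 0 <= _^-1)) // invr_ge0 ler0n.
    by rewrite normrM nX -mulrA; apply: ler_wpM2l.
  apply: (le_trans (ler_normB _ _)).
  apply: (le_trans (lerD (ler_normD _ _) (lexx _))).
  apply: (le_trans (lerD (lerD (ler_normD _ _) (lexx _)) (lexx _))).
  rewrite /K0 !mulrDl; lra.
have [C2 HC2] : exists C2 : R, 0 <= C2 /\ u 0%N <= C2.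
  by exists (u 0%N); split => //; exact: normr_ge0.
exists ((C2 + K0)); split; first lra.
move=> n.
have := @grow u C2 K0 k (proj1 HC2) K00 (proj2 HC2) step n.
rewrite /u => h.
rewrite (exprS _ k.+1) mulrCA [_ * (n.+1%:R)]mulrC.
by apply: ler_wpM2l => //; exact: ler0n.
Qed.

End Est.

Section A.
Variable R : realType.

Definition cf (d m k i : nat) : R :=
  ((d - i)`! * (d - (k - i))`!)%:R / ((d`! * (d - k)`!)%:R) *
  (((m - i)`! * (m - (k - i))`!)%:R / ((m`! * (m - k)`!)%:R)).

Definition wt (d m k : nat) : R := ((d - k)`! * (m - k)`!)%:R / ((d`! * m`!)%:R).

Lemma fact_neq0 n : (n`!)%:R != 0 :> R.
Proof. by rewrite pnatr_eq0 -lt0n fact_gt0. Qed.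

Lemma sign_sq k : (-1) ^+ k * (-1) ^+ k = 1 :> R.
Proof. by rewrite -exprD -signr_odd oddD addbb expr0. Qed.

Lemma ecoef_rconv (d m : nat) (p q : {poly R}) (k : nat) : (k <= d)%N ->
  ecoef d (rconv d m p q) k =
  \sum_(i < k.+1) cf d m k i * ecoef d p i * ecoef d q (k - i).
Proof.
move=> kd.
rewrite {1}/ecoef /rconv coef_sum.
rewrite (bigD1 (Ordinal (kd : (k < d.+1)%N))) //= coefZ coefXn eqxx mulr1.
rewrite [X in _ + X]big1 ?addr0; last first.
  move=> j hj0.
  have hj : (nat_of_ord j != k).
    by apply/eqP => h; apply: (negP hj0); apply/eqP; apply: val_inj.
  rewrite coefZ coefXn.
  have -> : (d - k == d - j)%N = false.
    apply/negbTE; apply/eqP => h; apply: (negP hj); apply/eqP.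
    have jd : (j <= d)%N by rewrite -ltnS.
    move: h; lia.
  by rewrite mulr0.
by rewrite mulrA sign_sq mul1r.
Qed.

Lemma wt_cf (d m k i : nat) : wt d m k * cf d m k i = wt d m i * wt d m (k - i).
Proof.
rewrite /wt /cf !natrM.
have := fact_neq0 d; have := fact_neq0 m; have := fact_neq0 (d - k);
have := fact_neq0 (m - k) => *.
by field; rewrite !fact_neq0.
Qed.

Lemma wt0 d m : wt d m 0 = 1.
Proof. by rewrite /wt !subn0 divff // natrM mulf_neq0 // fact_neq0. Qed.

Lemma wt_le1 d m k : 0 <= wt d m k <= 1.
Proof.
rewrite /wt; apply/andP; split.
  by apply: divr_ge0; exact: ler0n.
have h0 : (0 : R) < (d`! * m`!)%:R by rewrite ltr0n muln_gt0 !fact_gt0.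
rewrite ler_pdivrMr // mul1r ler_nat.
by apply: leq_mul; apply: leq_fact; exact: leq_subr.
Qed.


Lemma size_index_enum_ord d : size (index_enum 'I_d) = d.
Proof. by rewrite [index_enum _]unlock -enumT size_enum_ord. Qed.

Lemma prod_coef_bound (rs : seq R) (b : R) : 0 <= b ->
  (forall y, y \in rs -> `|y| <= b) ->
  forall i, `|(\prod_(y <- rs) ('X - y%:P))`_i| <= (1 + b) ^+ size rs.
Proof.
move=> hb; elim: rs => [|y rs IH] hy i.
  rewrite big_nil coef1 expr0; case: (i == 0%N) => /=; by rewrite ?normr1 ?normr0 ?ler01.
rewrite big_cons mulrBl coefB coefXM coefCM /=.
have IH' := IH (fun z hz => hy z (@mem_behead _ (y :: rs) z hz)).
have hyb : `|y| <= b by apply: hy; rewrite in_cons eqxx.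
set A := (1 + b) ^+ size rs.
have A0 : 0 <= A by apply: exprn_ge0; lra.
apply: (le_trans (ler_normB _ _)).
have h1 : `|(if i == 0%N then 0 else (\prod_(y0 <- rs) ('X - y0%:P))`_i.-1)| <= A.
  by case: (i == 0%N); rewrite ?normr0 // IH'.
have h2 : `|y * (\prod_(y0 <- rs) ('X - y0%:P))`_i| <= b * A.
  rewrite normrM; apply: ler_pM => //; exact: normr_ge0.
rewrite exprS -/A; lra.
Qed.

Definition Gs (d m : nat) (p : nat -> {poly R}) (n k : nat) : R := wt d m k * ecoef d (Defs.convN d m p n) k.
Definition Hs (d m : nat) (p : nat -> {poly R}) (n k : nat) : R := wt d m k * ecoef d (p n) k.

Lemma Gs_rec d m p n k : (k <= d)%N ->
  Gs d m p n.+1 k = \sum_(i < k.+1) Gs d m p n i * Hs d m p n.+1 (k - i).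
Proof.
move=> kd; rewrite /Gs /= ecoef_rconv // mulr_sumr; apply: eq_bigr => i _.
rewrite /Hs; have := wt_cf d m k i.
set a := wt d m k; set b := cf d m k i; set c := wt d m i; set e := wt d m (k - i).
move=> h; set x := ecoef d _ i; set y := ecoef d _ (k - i).
transitivity ((a * b) * x * y); first ring.
by rewrite h; ring.
Qed.

Lemma coef_comp_scaleX (Q : {poly R}) (a : R) i :
  (Q \Po (a *: 'X))`_i = a ^+ i * Q`_i.
Proof.
rewrite coef_comp_poly.
under eq_bigr => j _ do rewrite exprZn coefZ coefXn.
case: (ltnP i (size Q)) => hi.
  rewrite (bigD1 (Ordinal hi)) //= eqxx mulr1 [X in _ + X]big1 ?addr0; first by rewrite mulrC.
  move=> j hj0.
  have -> : (i == j) = false.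
    apply/negbTE; apply/eqP => h; apply: (negP hj0); apply/eqP; apply: val_inj.
    by rewrite /= h.
  by rewrite mulr0 mulr0.
rewrite nth_default // mulr0 big1 // => j _.
have -> : (i == j) = false.
  apply/negbTE; apply/eqP => h; have := ltn_ord j; rewrite -h; lia.
by rewrite mulr0 mulr0.
Qed.


Lemma rconv_size d m (P Q : {poly R}) : (size (rconv d m P Q) <= d.+1)%N.
Proof.
apply/leq_sizeP => j hj; rewrite /rconv coef_sum big1 // => k _.
rewrite coefZ coefXn.
have -> : (j == d - k)%N = false by apply/negbTE; apply/eqP => h; move: hj; rewrite h; lia.
by rewrite mulr0.
Qed.

Lemma cf00 d m : cf d m 0 0 = 1.
Proof.
by rewrite /cf !subn0 !divff ?mulr1 // natrM mulf_neq0 // fact_neq0.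
Qed.

Lemma convN_size d m (p : nat -> {poly R}) :
  (forall i, size (p i) = d.+1 /\ (p i)`_d = 1) ->
  forall n, size (Defs.convN d m p n) = d.+1 /\ (Defs.convN d m p n)`_d = 1.
Proof.
move=> hp; elim=> [|n [IHs IHc]]; first exact: hp.
have hc : (Defs.convN d m p n.+1)`_d = 1.
  have := @ecoef_rconv d m (Defs.convN d m p n) (p n.+1) 0 (leq0n d).
  rewrite big_ord1 /ecoef /= !subn0 !expr0 !mul1r cf00 mul1r IHc mul1r.
  by case: (hp n.+1) => _ ->.
split => //.
apply/eqP; rewrite eqn_leq rconv_size /=.
rewrite ltnNge; apply/negP => h.
by move: hc; rewrite nth_default // => /eqP; rewrite eq_sym oner_eq0.
Qed.


Lemma wt_neq0 d m k : wt d m k != 0.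
Proof.
by rewrite /wt mulf_neq0 // ?invr_eq0 natrM mulf_neq0 // fact_neq0.
Qed.

Lemma Sop_coef (P : {poly R}) i :
  (Sop P)`_i = if ~~ odd i then P`_(i./2) else 0.
Proof.
rewrite /Sop coef_comp_poly_Xn // dvdn2.
case: (odd i) => //=.
by rewrite divn2.
Qed.

Lemma Ptilde_coef d m (p : nat -> {poly R}) n i :
  (forall i, size (p i) = d.+1 /\ (p i)`_d = 1) ->
  (Ptilde d m p n.+1)`_i =
   ((Num.sqrt n.+1%:R)^-1) ^+ (d * 2) * (Num.sqrt n.+1%:R) ^+ i *
   (Sop (Defs.convN d m p n))`_i.
Proof.
move=> hp.
have [hs _] := convN_size d m p hp n.
rewrite /Ptilde /dilate /= coefZ coef_comp_scaleX invrK mulrA.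
by rewrite /Sop size_comp_poly size_polyXn hs.
Qed.

Lemma Ptilde_odd d m (p : nat -> {poly R}) n i :
  (forall i, size (p i) = d.+1 /\ (p i)`_d = 1) -> odd i ->
  (Ptilde d m p n.+1)`_i = 0.
Proof. by move=> hp oi; rewrite Ptilde_coef // Sop_coef oi mulr0. Qed.

Lemma Ptilde_big d m (p : nat -> {poly R}) n j :
  (forall i, size (p i) = d.+1 /\ (p i)`_d = 1) -> (d < j)%N ->
  (Ptilde d m p n.+1)`_(j.*2) = 0.
Proof.
move=> hp dj; rewrite Ptilde_coef // Sop_coef odd_double /= doubleK.
have [hs _] := convN_size d m p hp n.
by rewrite nth_default ?mulr0 // hs.
Qed.

Lemma Ptilde_main d m (p : nat -> {poly R}) n j :
  (forall i, size (p i) = d.+1 /\ (p i)`_d = 1) -> (j <= d)%N ->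
  (Ptilde d m p n.+1)`_(j.*2) =
  (-1) ^+ (d - j) / wt d m (d - j) *
   (Gs d m p n (d - j) / (n.+1%:R) ^+ (d - j)).
Proof.
move=> hp jd; rewrite Ptilde_coef // Sop_coef odd_double /= doubleK.
set N : R := n.+1%:R.
have N0 : 0 < N by rewrite ltr0n.
set t := Num.sqrt N.
have t0 : 0 < t by rewrite sqrtr_gt0.
have tN : t ^+ 2 = N by rewrite sqr_sqrtr // ltW.
set kk := (d - j)%N.
have e1 : t^-1 ^+ (d * 2) * t ^+ j.*2 = (N ^+ kk)^-1.
  have -> : (d * 2 = 2 * kk + j.*2)%N by rewrite /kk -muln2; lia.
  rewrite exprD -mulrA [t^-1 ^+ j.*2]exprVn mulVf ?mulr1; last by rewrite expf_neq0 // gt_eqF.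
  by rewrite exprM exprVn tN exprVn.
rewrite e1 /Gs /ecoef.
have -> : (d - kk = j)%N by rewrite /kk subKn.
have w0 := wt_neq0 d m kk.
have Nk : N ^+ kk != 0 by rewrite expf_neq0 // gt_eqF.
set sg := (-1) ^+ kk.
have sg0 : sg != 0 by rewrite signr_eq0.
have sg2 : sg * sg = 1 by rewrite /sg sign_sq.
transitivity ((sg * sg) * ((N ^+ kk)^-1 * (Defs.convN d m p n)`_j)).
  by rewrite sg2 mul1r.
by field; rewrite Nk w0.
Qed.


Definition lc (d m i : nat) : R :=
  'C(d + (m - d), d - i)%:R * (-1) ^+ i / (i`!)%:R.

Lemma laguerre_poly d m : laguerre R d (m - d) = \poly_(i < d.+1) lc d m i :> {poly R}.
Proof. by rewrite poly_def. Qed.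

Lemma lc_d d m : lc d m d = (-1) ^+ d / (d`!)%:R.
Proof. by rewrite /lc subnn bin0 mul1r. Qed.

Lemma lc_d_neq0 d m : lc d m d != 0.
Proof. by rewrite lc_d mulf_neq0 ?signr_eq0 ?invr_eq0 ?fact_neq0. Qed.

Lemma lag_coef d m (sigma : R) i : 0 < sigma -> (0 < m)%N ->
  (lag_target d m sigma)`_i =
  (lc d m d * (m%:R / sigma ^+ 2) ^+ d)^-1 *
   (if ~~ odd i then (if (i./2 < d.+1)%N then (m%:R / sigma ^+ 2) ^+ i./2 * lc d m i./2 else 0) else 0).
Proof.
move=> s0 m0; set a := m%:R / sigma ^+ 2.
have a0 : a != 0.
  by rewrite /a mulf_neq0 // ?invr_eq0 ?expf_neq0 ?pnatr_eq0 -?lt0n // gt_eqF.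
have E : laguerre R d (m - d) \Po ((m%:R / sigma ^+ 2) *: 'X^2)
       = (laguerre R d (m - d) \Po (a *: 'X)) \Po 'X^2.
  by rewrite -comp_polyA comp_polyZ comp_polyX.
have sz : size (a *: 'X^2 : {poly R}) = 3%N by rewrite size_scale // size_polyXn.
have szL : size (laguerre R d (m - d) : {poly R}) = d.+1.
  by rewrite laguerre_poly size_poly_eq // lc_d_neq0.
rewrite /lag_target /= E coefZ.
congr (_ * _).
  rewrite -E lead_coef_comp ?sz // szL /= lead_coefZ lead_coefXn mulr1.
  by rewrite laguerre_poly lead_coef_poly // lc_d_neq0.
rewrite -/(Sop _) Sop_coef coef_comp_scaleX laguerre_poly coef_poly.
by case: (odd i) => //=; case: ifP => _; rewrite ?mulr0.
Qed.


Lemma p_props d (r : 'I_d -> R) :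
  let P := \prod_(j < d) ('X - (r j ^+ 2)%:P) in
  [/\ size P = d.+1, P`_d = 1,
      (0 < d)%N -> P`_(d.-1) = - \sum_(j < d) r j ^+ 2 &
      forall i, `|P`_i| <= (1 + \sum_(j < d) r j ^+ 2) ^+ d].
Proof.
move=> P.
set rs := [seq r j ^+ 2 | j <- index_enum 'I_d].
have EP : P = \prod_(y <- rs) ('X - y%:P) by rewrite /P big_map.
have srs : size rs = d by rewrite size_map size_index_enum_ord.
have Es : \sum_(j < d) r j ^+ 2 = \sum_(y <- rs) y by rewrite big_map.
have hs : size P = d.+1 by rewrite EP size_prod_XsubC srs.
split => //.
- have := lead_coef_prod_XsubC rs predT (fun y => y).
  rewrite -big_filter filter_predT -EP => <-.
  by rewrite /lead_coef hs.
- move=> d0; rewrite EP Es -srs coefPn_prod_XsubC // srs -lt0n.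
  exact: d0.
- move=> i; rewrite EP.
  have hb : 0 <= \sum_(j < d) r j ^+ 2 by apply: sumr_ge0 => j _; exact: sqr_ge0.
  have := @prod_coef_bound rs _ hb; rewrite srs; apply.
  move=> y /mapP [j _ ->].
  rewrite ger0_norm ?sqr_ge0 // (bigD1 j) //= lerDl.
  by apply: sumr_ge0 => k _; exact: sqr_ge0.
Qed.


Lemma target_eq d m j (sigma : R) : (j <= d)%N -> (d <= m)%N -> (0 < m)%N -> 0 < sigma ->
  (lc d m d * (m%:R / sigma ^+ 2) ^+ d)^-1 * ((m%:R / sigma ^+ 2) ^+ j * lc d m j) =
  (-1) ^+ (d - j) / wt d m (d - j) *
   ((sigma ^+ 2 / m%:R) ^+ (d - j) / ((d - j)`!)%:R).
Proof.
move=> jd dm m0 s0; set a := m%:R / sigma ^+ 2.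
set kk := (d - j)%N.
have dj : d = (j + kk)%N by rewrite /kk subnKC.
have km : (kk <= m)%N by rewrite /kk; lia.
have hC : ('C(m, kk))%:R = (m`!)%:R / ((kk`!)%:R * ((m - kk)`!)%:R) :> R.
  by rewrite -(bin_fact km) !natrM mulfK // mulf_neq0 // fact_neq0.
have ea : sigma ^+ 2 / m%:R = a^-1 by rewrite /a invf_div.
have a0 : a != 0.
  by rewrite /a mulf_neq0 // ?invr_eq0 ?expf_neq0 ?pnatr_eq0 -?lt0n // gt_eqF.
rewrite lc_d /lc /wt ea exprVn (subnKC dm) -/kk hC.
have -> : (d - kk = j)%N by rewrite /kk subKn.
have e1 : (-1) ^+ d = (-1) ^+ j * (-1) ^+ kk :> R by rewrite {1}dj exprD.
have e2 : a ^+ d = a ^+ j * a ^+ kk by rewrite {1}dj exprD.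
rewrite e1 e2 !natrM.
set sj := (-1) ^+ j; set sk := (-1) ^+ kk.
have sj0 : sj != 0 by rewrite signr_eq0.
have sk0 : sk != 0 by rewrite signr_eq0.
have sk2 : sk * sk = 1 by rewrite /sk sign_sq.
have := fact_neq0 m; have := fact_neq0 kk; have := fact_neq0 (m - kk);
have := fact_neq0 j; have := fact_neq0 d => f1 f2 f3 f4 f5.
have aj : a ^+ j != 0 by rewrite expf_neq0.
have ak : a ^+ kk != 0 by rewrite expf_neq0.
rewrite -[LHS]mulr1 -{1}sk2.
field.
by rewrite ?sj0 ?sk0 ?aj ?ak ?f1 ?f2 ?f3 ?f4 ?f5.
Qed.

End A.

Module Aux.
Import numFieldNormedType.Exports.
Lemma lim_rate (R : realType) (u : nat -> R) (l C : R) :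
  (forall n, `|u n - l| <= C * (n.+1%:R)^-1) -> u @ \oo --> l.
Proof.
move=> H.
have h1 : (fun n => l - C * harmonic n) @ \oo --> l - C * 0.
  apply: cvgB; first exact: cvg_cst.
  apply: cvgMr; exact: cvg_harmonic.
have h2 : (fun n => l + C * harmonic n) @ \oo --> l + C * 0.
  apply: cvgD; first exact: cvg_cst.
  apply: cvgMr; exact: cvg_harmonic.
rewrite mulr0 subr0 in h1; rewrite mulr0 addr0 in h2.
apply: (squeeze_cvgr _ h1 h2).
near=> n.
have := H n; rewrite /harmonic /= ler_norml => /andP[a b].
move: a b; set x := C / _; set y := u n => a b. apply/andP; split; lra.
Unshelve. all: by end_near.
Qed.
End Aux.

Lemma ratio_le (R : realFieldType) (x C a b : R) : 0 < a -> 0 < b ->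
  x * a <= C * b -> x / b <= C * a^-1.
Proof.
move=> a0 b0 h.
by rewrite ler_pdivrMr // mulrAC ler_pdivlMr.
Qed.

Theorem mainTheorem8 (R : realType) (d m : nat) (sigma : R)
    (p : nat -> {poly R}) (r : nat -> 'I_d -> R) :
  (1 <= d)%N -> (d <= m)%N -> 0 < sigma ->
  (forall i, p i = \prod_(j < d) ('X - ((r i j) ^+ 2)%:P)) ->
  (forall i, (d%:R)^-1 * \sum_(j < d) (r i j) ^+ 2 = sigma ^+ 2) ->
  forall k : nat,
    (fun N : nat => (Ptilde d m p N.+1)`_k) @ \oo --> (lag_target d m sigma)`_k.
Proof.
move=> d1 dm s0 hp hsum k.
have m0 : (0 < m)%N by apply: leq_trans dm.
have dn0 : (d%:R : R) != 0 by rewrite pnatr_eq0 -lt0n.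
have hS : forall i, \sum_(j < d) r i j ^+ 2 = d%:R * sigma ^+ 2.
  by move=> i; rewrite -(hsum i) mulrA divff ?mul1r.
have hpp : forall i, size (p i) = d.+1 /\ (p i)`_d = 1.
  by move=> i; rewrite hp; case: (p_props R d (r i)).
set s := sigma ^+ 2 / m%:R.
set B := (1 + d%:R * sigma ^+ 2) ^+ d.
have H0 : forall n, Hs R d m p n 0 = 1.
  move=> n; rewrite /Hs (wt0 R d m) mul1r /ecoef expr0 mul1r subn0; by case: (hpp n).
have H1 : forall n, Hs R d m p n 1 = s.
  move=> n; rewrite /Hs /ecoef subn1 hp; case: (p_props R d (r n)) => _ _ h _.
  rewrite (h d1) hS expr1 mulN1r opprK /wt /s !subn1.
  have fd : (d`!)%:R = d%:R * ((d.-1)`!)%:R :> R.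
    by rewrite -natrM -{1}(prednK d1) factS prednK.
  have fm : (m`!)%:R = m%:R * ((m.-1)`!)%:R :> R.
    by rewrite -natrM -{1}(prednK m0) factS prednK.
  have mn0 : (m%:R : R) != 0 by rewrite pnatr_eq0 -lt0n.
  rewrite !natrM fd fm.
  have := fact_neq0 R d.-1; have := fact_neq0 R m.-1 => h1 h2.
  by field; rewrite ?h1 ?h2 ?dn0 ?mn0.
have HB : forall n j, (j <= d)%N -> `|Hs R d m p n j| <= B.
  move=> n j _; rewrite /Hs /ecoef normrM (normrM ((-1) ^+ j)) normr_sign mul1r.
  have /andP [w0 w1] := wt_le1 R d m j.
  rewrite (ger0_norm w0) -[B]mul1r.
  apply: ler_pM; [exact: w0 | exact: normr_ge0 | exact: w1 | ].
  by rewrite hp; case: (p_props R d (r n)) => _ _ _ h; rewrite /B -(hS n).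
have Hest := @est R (Gs R d m p) (Hs R d m p) s B d (fun k => erefl) H0 H1 HB
  (fun n k hk => Gs_rec R d m p n k hk).
have [ok | ek] := boolP (odd k).
  rewrite (lag_coef R d m sigma _ s0 m0) ok /= mulr0.
  have -> : (fun n => (Ptilde d m p n.+1)`_k) = fun _ => 0.
    by apply: funext => n; rewrite (Ptilde_odd R d m p n k hpp ok).
  by apply: (@Aux.lim_rate R _ _ 0) => n; rewrite subrr normr0 mul0r.
set j := k./2.
have kj : k = j.*2 by rewrite -{1}(odd_double_half k) (negbTE ek) add0n.
rewrite kj (lag_coef R d m sigma _ s0 m0) odd_double doubleK /=.
case: (ltnP d j) => hj.
  rewrite ltnNge hj /= mulr0.
  have -> : (fun n => (Ptilde d m p n.+1)`_(j.*2)) = fun _ => 0.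
    by apply: funext => n; rewrite (Ptilde_big R d m p n j hpp hj).
  by apply: (@Aux.lim_rate R _ _ 0) => n; rewrite subrr normr0 mul0r.
rewrite ltnS hj (target_eq R d m j sigma hj dm m0 s0).
set kk := (d - j)%N.
have [C HC] := Hest kk (leq_subr j d).
set kap := (-1) ^+ kk / wt R d m kk.
apply: (@Aux.lim_rate R _ _ (`|kap| * C)) => n.
rewrite (Ptilde_main R d m p n j hpp hj) -/kk -mulrBr normrM -[X in _ <= X]mulrA.
apply: ler_wpM2l; first exact: normr_ge0.
set N : R := n.+1%:R.
have N0 : 0 < N by rewrite ltr0n.
have Nk : 0 < N ^+ kk by apply: exprn_gt0.
have e : Gs R d m p n kk / N ^+ kk - s ^+ kk / (kk`!)%:R
       = (Gs R d m p n kk - Fq R s n kk) / N ^+ kk.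
  rewrite /Fq -/N; field.
  by rewrite gt_eqF //= fact_neq0.
rewrite e normrM (ger0_norm (_ : 0 <= (N ^+ kk)^-1)); last by rewrite invr_ge0 ltW.
apply: ratio_le => //; exact: HC.
Qed.
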